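(* Let $X$ be a compact metric space, $T:X\to X$ continuous, $\mathcal U$ a partition of $X$ into finitely many closed-open sets, $N\in\mathbb N$, $s\in\mathbb R$ and $f:X\to\mathbb R$ continuous. (i) If $E_1\subseteq E_2\subseteq\cdots$ and $\bigcup_iE_i=E$, then $M_N^s(\mathcal U,f,E)=\lim_{i\to\infty}M_N^s(\mathcal U,f,E_i)$. (ii) If $Z\subseteq X$ is analytic, then $M_N^s(\mathcal U,f,Z)=\sup\{M_N^s(\mathcal U,f,K):K\subseteq Z,\ K\text{ compact}\}$.
   Context: $f_n=\sum_{i=0}^{n-1}f\circ T^i$. $\mathcal W_n(\mathcal U)$ is the set of strings $\mathbf U=U_1\cdots U_n$ with $U_i\in\mathcal U$; $m(\mathbf U)=n$ is its length, and $X(\mathbf U)=\{x\in X:T^{j-1}x\in U_j,\ j=1,\dots,n\}$. A family $\Lambda\subseteq\bigcup_n\mathcal W_n(\mathcal U)$ covers $Z$ if $\bigcup_{\mathbf U\in\Lambda}X(\mathbf U)\supseteq Z$. Define $M_N^s(\mathcal U,f,Z)=\inf_\Lambda\sum_{\mathbf U\in\Lambda}\exp\big(-sm(\mathbf U)+\sup_{y\in X(\mathbf U)}f_{m(\mathbf U)}(y)\big)$, infimum over all $\Lambda\subseteq\bigcup_{n\ge N}\mathcal W_n(\mathcal U)$ covering $Z$, with the convention $\sup_{y\in\emptyset}=-\infty$. A set is analytic if it is a continuous image of $\mathbb N^{\mathbb N}$ with the product topology. *)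

(* Defs.v *)
From HB Require Import structures.
From mathcomp Require Import all_boot all_order all_algebra.
From mathcomp Require Import all_classical all_reals all_analysis.
Set Implicit Arguments.
Unset Strict Implicit.
Unset Printing Implicit Defensive.
Import Order.TTheory GRing.Theory Num.Theory numFieldTopology.Exports.
Local Open Scope classical_set_scope.
Local Open Scope ring_scope.

Definition baire_space : topologicalType := {ptws nat -> nat}.

Section Pressure.
Context {R : realType} {X : metricType R}.

Definition analytic (Z : set X) : Prop :=
  exists g : baire_space -> X, continuous g /\ range g = Z.

Definition clopen_partition (U : set (set X)) : Prop :=
  [/\ finite_set U,
      (forall A, U A -> A !=set0),
      (forall A B, U A -> U B -> A <> B -> A `&` B = set0),
      \bigcup_(A in U) A = setT &
      (forall A, U A -> open A /\ closed A)].

Definition birkhoff_sum (T : X -> X) (f : X -> R) (n : nat) (x : X) : R :=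
  \sum_(i < n) f (iter i T x).

(* X(U_1 ... U_n) = {x : T^{j-1} x \in U_j, j = 1..n}  (0-indexed here) *)
Definition cyl (T : X -> X) (w : seq (set X)) : set X :=
  [set x | forall j, (j < size w)%N -> nth set0 w j (iter j T x)].

(* exp(-s m(U) + sup_{y in X(U)} f_{m(U)}(y)), with sup over empty = -oo *)
Definition string_weight (T : X -> X) (f : X -> R) (s : R) (w : seq (set X))
  : \bar R :=
  expeR ((- s * (size w)%:R)%:E +
         ereal_sup [set (birkhoff_sum T f (size w) y)%:E | y in cyl T w])%E.

Definition admissible (T : X -> X) (U : set (set X)) (N : nat) (Z : set X)
  (L : set (seq (set X))) : Prop :=
  (forall w, L w ->
     (N <= size w)%N /\ (forall j, (j < size w)%N -> U (nth set0 w j))) /\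
  Z `<=` \bigcup_(w in L) cyl T w.

Definition MNs (T : X -> X) (U : set (set X)) (f : X -> R) (N : nat) (s : R)
  (Z : set X) : \bar R :=
  ereal_inf [set esum L (string_weight T f s) | L in admissible T U N Z].

End Pressure.

(* Main.v *)
Require Import Defs.
From HB Require Import structures.
From mathcomp Require Import all_boot all_order all_algebra.
From mathcomp Require Import all_classical all_reals all_analysis.
From mathcomp Require Import finmap ring lra.
Import Order.TTheory GRing.Theory Num.Theory numFieldTopology.Exports.
Local Open Scope classical_set_scope.
Local Open Scope ring_scope.

Definition Wn (sg : baire_space) (n : nat) : set baire_space :=
  [set t | forall j, (j < n)%N -> t j = sg j].

Lemma baire_cvg (sg : baire_space) (tau : nat -> baire_space) :
  (forall n j, (j < n)%N -> tau n j = sg j) -> tau @ \oo --> sg.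
Proof.
move=> H; apply/(@pointwise_cvgP nat nat _ sg) => t.
apply: cvg_near_cst; exists t.+1 => // n /= tn; exact: H.
Qed.

Lemma baire_nbhsW sg n : nbhs sg (Wn sg n).
Proof.
elim: n => [|n IH].
  by apply: filterS filterT => t _ j.
have h : nbhs sg ((proj n) @^-1` [set sg n]).
  by apply: (@proj_continuous nat (fun _ => nat) n sg).
apply: filterS (filterI IH h) => t [Ht Hn] j.
rewrite ltnS leq_eqVlt => /orP[/eqP ->|jn]; first exact: Hn.
exact: Ht.
Qed.

Lemma baire_tube_pt (V : set baire_space) sg : nbhs sg V ->
  exists n, Wn sg n `<=` V.
Proof.
move=> nV; apply: contrapT => H.
have ex : forall n, exists t : baire_space, Wn sg n t /\ ~ V t.
  move=> n; apply: contrapT => H2; apply: H; exists n => t Wt.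
  by apply: contrapT => Vt; apply: H2; exists t.
have [tau htau] := choice ex.
have := @baire_cvg sg tau (fun n j jn => (htau n).1 j jn) V nV.
by move=> [n _ /(_ n (leqnn n))]; apply: (htau n).2.
Qed.

Definition Pm (m : nat -> nat) : set baire_space := [set t | forall j, (t j <= m j)%N].
Definition Pk (m : nat -> nat) k : set baire_space :=
  [set t | forall j, (j < k)%N -> (t j <= m j)%N].

Lemma Pm_compact m : compact (Pm m).
Proof.
apply: (@tychonoff nat (fun _ => nat) (fun j => [set n | (n <= m j)%N])).
move=> j; apply: finite_compact.
have -> : [set n | (n <= m j)%N] = `I_(m j).+1 by [].
exact: finite_II.
Qed.

Lemma tube m (V : set baire_space) : open V -> Pm m `<=` V ->
  exists k, Pk m k `<=` V.
Proof.
move=> oV PV; apply: contrapT => H.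
have ex : forall k, exists t : baire_space, Pk m k t /\ ~ V t.
  move=> k; apply: contrapT => H2; apply: H; exists k => t Pt.
  by apply: contrapT => Vt; apply: H2; exists t.
have [tau htau] := choice ex.
pose rho k : baire_space := fun j => minn (tau k j) (m j).
pose F := rho @ \oo.
have FP : F (Pm m) by exists 0%N => // k _ j; rewrite /rho geq_minr.
have [sg [Psg csg]] := @Pm_compact m F _ FP.
have nV : nbhs sg V by apply: open_nbhs_nbhs; split => //; exact: PV.
have [n Wsub] := @baire_tube_pt V sg nV.
pose A := [set x | exists2 k, (n <= k)%N & x = rho k].
have FA : F A by exists n => // k /= kn; exists k.
have [x [[k kn ->] Wk]] := csg A (Wn sg n) FA (baire_nbhsW sg n).
apply: (htau k).2; apply: Wsub => j jn; rewrite -(Wk j jn) /rho.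
apply/esym/minn_idPl; apply: (htau k).1; exact: leq_trans jn kn.
Qed.

Lemma finite_in_incr (T : choiceType) (H : nat -> set T) (F : set T) :
  (forall i, H i `<=` H i.+1) -> finite_set F -> F `<=` \bigcup_i H i ->
  exists i, F `<=` H i.
Proof.
move=> incr /finite_fsetP [Xs ->] sub.
have mono : forall i j, (i <= j)%N -> H i `<=` H j.
  move=> i j /subnK <-; elim: (j - i)%N => [|k IH] //=.
  by rewrite addSn; apply: subset_trans (incr _).
suff : forall sq : seq T, (forall x, x \in sq -> exists i, H i x) ->
    exists i, forall x, x \in sq -> H i x.
  case/(_ (Xs : seq T)) => [x xX|i Hi]; last by exists i => x /= /Hi.
  by have [i _ Hx] := sub x xX; exists i.
elim => [|y sq IH] hy; first by exists 0%N.
have [i Hi] := IH (fun x xs => hy x (@mem_behead _ (y :: sq) _ xs)).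
have [j Hj] := hy y (mem_head _ _).
exists (maxn i j) => x; rewrite inE => /orP[/eqP ->|xs].
  by apply: mono Hj; rewrite leq_maxr.
by apply: mono (Hi _ xs); rewrite leq_maxl.
Qed.

Definition maxel {T : Type} (L : set (seq T)) w :=
  L w /\ forall k, (k < size w)%N -> ~ L (take k w).

Fixpoint gam {T : Type} (Lam : nat -> set (seq T)) (i : nat) : set (seq T) :=
  match i with
  | 0%N => Lam 0%N
  | i'.+1 => maxel (gam Lam i' `|` Lam i'.+1)
  end.

Section Comb.
Context {R : realType} {X : metricType R}.
Variables (T : X -> X) (U : set (set X)) (f : X -> R) (s : R) (N : nat).
Hypothesis hU : clopen_partition U.

Definition str_ok (w : seq (set X)) := forall j, (j < size w)%N -> U (nth set0 w j).

Lemma cyl_take w k : cyl T w `<=` cyl T (take k w).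
Proof.
move=> x Hx j; rewrite size_take leq_min => /andP[jk jw].
by rewrite nth_take //; apply: Hx.
Qed.

Lemma comparable v w x : str_ok v -> str_ok w -> cyl T v x -> cyl T w x ->
  v = take (size v) w \/ w = take (size w) v.
Proof.
have key : forall v w, str_ok v -> str_ok w -> cyl T v x -> cyl T w x ->
   (size v <= size w)%N -> v = take (size v) w.
  move=> {}v {}w ov ow cv cw le.
  apply: (@eq_from_nth _ set0); first by rewrite size_takel.
  move=> j jv; rewrite nth_take //.
  have jw : (j < size w)%N by apply: leq_trans le.
  case: hU => _ _ disj _ _.
  apply: contrapT => ne.
  have := disj _ _ (ov _ jv) (ow _ jw) ne.
  move/seteqP => [/(_ (iter j T x)) H _]; apply: H; split; [exact: cv | exact: cw].
move=> ov ow cv cw; case: (leqP (size v) (size w)) => le.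
  by left; apply: key.
by right; apply: key => //; apply: ltnW.
Qed.


Lemma maxel_sub (L : set (seq (set X))) : maxel L `<=` L.
Proof. by move=> w []. Qed.

Lemma maxel_exists (L : set (seq (set X))) w : L w ->
  exists k, (k <= size w)%N /\ maxel L (take k w).
Proof.
move=> Lw.
have ex : exists n, (n <= size w)%N && `[< L (take n w) >].
  by exists (size w); rewrite leqnn take_size; apply/andP; split => //; apply/asboolP.
case: (ex_minnP ex) => n /andP[nle /asboolP Ln] nmin.
exists n; split => //; split => // k.
rewrite size_takel // => kn Lk.
rewrite take_takel ?(ltnW kn) // in Lk; have := nmin k.
have -> : (k <= size w)%N && `[< L (take k w) >].
  by apply/andP; split; [apply: leq_trans (ltnW kn) nle | apply/asboolP].
by move=> /(_ isT); rewrite leqNgt kn.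
Qed.

Lemma maxel_antichain (L : set (seq (set X))) v w x :
  (forall w, L w -> str_ok w) ->
  maxel L v -> maxel L w -> cyl T v x -> cyl T w x -> v = w.
Proof.
move=> ok [Lv mv] [Lw mw] cv cw.
case: (@comparable v w x (ok _ Lv) (ok _ Lw) cv cw) => e.
  case: (ltnP (size v) (size w)) => h; first by exfalso; apply: (mw _ h); rewrite -e.
  by rewrite e take_oversize.
case: (ltnP (size w) (size v)) => h; first by exfalso; apply: (mv _ h); rewrite -e.
by rewrite e take_oversize.
Qed.


Local Notation W := (string_weight T f s).
Local Notation M := (MNs T U f N s).
Local Notation adm := (admissible T U N).

Lemma W_ge0 w : (0 <= W w)%E.
Proof. exact: expeR_ge0. Qed.

Lemma esum_sub (A B : set (seq (set X))) : A `<=` B -> (esum A W <= esum B W)%E.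
Proof.
move=> AB; apply: ge_ereal_sup => _ [F [finF FA] <-].
by apply: esum_ge; exists F => //; split => // x /FA /AB.
Qed.

Lemma esum_disjU (A B : set (seq (set X))) : A `&` B = set0 ->
  esum (A `|` B) W = (esum A W + esum B W)%E.
Proof.
move=> dAB; rewrite (esumID A); last by move=> *; exact: W_ge0.
congr (_ + _)%E; congr (esum _ _); apply/seteqP; split => x /=.
- by case.
- by move=> Ax; split => //; left.
- by case=> -[] // Ax nAx.
- move=> Bx; split; [by right|] => Ax.
  by move/seteqP: dAB => [/(_ x) H _]; apply: H.
Qed.

Lemma M_le Z L : adm Z L -> (M Z <= esum L W)%E.
Proof. by move=> aL; apply: ereal_inf_lbound; exists L. Qed.

Lemma M_ge0 Z : (0 <= M Z)%E.
Proof.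
apply: le_ereal_inf_tmp => _ [L _ <-]; apply: esum_ge0 => *; exact: W_ge0.
Qed.

Lemma M_mono Z1 Z2 : Z1 `<=` Z2 -> (M Z1 <= M Z2)%E.
Proof.
move=> Z12; apply: le_ereal_inf_tmp => _ [L [aL cL] <-].
by apply: M_le; split => //; apply: subset_trans cL.
Qed.

Definition achain (L : set (seq (set X))) := forall w, L w -> maxel L w.

Lemma adm_ok Z L : adm Z L -> forall w, L w -> str_ok w.
Proof. by move=> [aL _] w /aL []. Qed.

Lemma maxel_adm Z (L : set (seq (set X))) : adm Z L -> adm Z (maxel L) /\ achain (maxel L).
Proof.
move=> aL; split; last first.
  move=> w [Lw mw]; split; first by [].
  by move=> k kw [] /(mw k kw).
split; first by move=> w /maxel_sub; case: aL => + _; apply.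
move=> x /(proj2 aL) [w Lw cw].
have [k [kw mk]] := @maxel_exists L w Lw.
by exists (take k w) => //; apply: cyl_take.
Qed.

Lemma M_approx Z r : (M Z < r)%E ->
  exists L, [/\ adm Z L, achain L & (esum L W < r)%E].
Proof.
move=> /ereal_inf_lt [_ [L aL <-] lt].
have [aL' ach] := @maxel_adm Z L aL.
exists (maxel L); split => //.
by apply: le_lt_trans lt; apply: esum_sub; apply: maxel_sub.
Qed.


Lemma esum_fin_sub (A B : set (seq (set X))) : A `<=` B ->
  esum B W \is a fin_num -> esum A W \is a fin_num.
Proof.
move=> AB; rewrite !ge0_fin_numE; last 2 first.
- by apply: esum_ge0 => *; exact: W_ge0.
- by apply: esum_ge0 => *; exact: W_ge0.
by apply: le_lt_trans; apply: esum_sub.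
Qed.

Lemma step (E1 E2 : set X) (G L : set (seq (set X))) (d : \bar R) :
  E1 `<=` E2 -> adm E1 G -> achain G -> adm E2 L -> achain L ->
  esum G W \is a fin_num -> (esum G W <= M E1 + d)%E ->
  (esum (maxel (G `|` L)) W <= esum L W + d)%E.
Proof.
move=> E12 aG chG aL chL finG leG.
pose A := [set g | G g /\ forall k, (k < size g)%N -> ~ L (take k g)].
pose A' := G `\` A.
pose B := [set l | L l /\ forall k, (k <= size l)%N -> ~ G (take k l)].
pose C := L `\` B.
have e1 : maxel (G `|` L) = A `|` B.
  apply/seteqP; split => w.
    move=> [GLw mw].
    have [Gw|nGw] := pselect (G w).
      by left; split => // k kw Lk; apply: (mw k kw); right.
    case: GLw => // Lw; right; split => // k; rewrite leq_eqVlt => /orP[/eqP ->|kw].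
      by rewrite take_size.
    by move=> Gk; apply: (mw k kw); left.
  case=> [[Gw mw]|[Lw mw]]; split; try by [left|right].
    by move=> k kw [/(proj2 (chG _ Gw) k kw)|/(mw k kw)].
  by move=> k kw [/(mw k (ltnW kw))|/(proj2 (chL _ Lw) k kw)].
have dAB : A `&` B = set0.
  apply/seteqP; split => // w [[Gw _] [_ /(_ (size w) (leqnn _))]].
  by rewrite take_size.
have dAA' : A `&` A' = set0 by apply/seteqP; split => // w [Aw [_]].
have eG : G = A `|` A'.
  apply/seteqP; split => w.
    by move=> Gw; have [Aw|nAw] := pselect (A w); [left|right].
  by case=> [[]|[]].
have dBC : B `&` C = set0 by apply/seteqP; split => // w [Bw [_]].
have eL : L = B `|` C.
  apply/seteqP; split => w.
    by move=> Lw; have [Bw|nBw] := pselect (B w); [left|right].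
  by case=> [[]|[]].
have dA'C : A' `&` C = set0.
  apply/seteqP; split => // w [[Gw nAw] [Lw _]].
  apply: nAw; split => // k kw Lk.
  exact: (proj2 (chL _ Lw) k kw).
have aA'C : adm E1 (A' `|` C).
  split.
    move=> w [[Gw _]|[Lw _]]; [exact: (proj1 aG) | exact: (proj1 aL)].
  move=> x E1x.
  have [g Gg cg] := proj2 aG x E1x.
  have [Ag|nAg] := pselect (A g); last by exists g => //; left.
  have [l Ll cl] := proj2 aL x (E12 _ E1x).
  exists l => //; right; split => // -[_ nG].
  have okg := @adm_ok _ _ aG _ Gg; have okl := @adm_ok _ _ aL _ Ll.
  case: (@comparable g l x okg okl cg cl) => e.
    apply: (nG (size g)); last by rewrite -e.
    have := size_take_min (size g) l; rewrite -e => /esym/minn_idPl.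
    by [].
  case: (ltnP (size l) (size g)) => h.
    by apply: (proj2 Ag _ h); rewrite -e.
  apply: (nG (size l) (leqnn _)); rewrite take_size e take_oversize //.
have G0 := fun w (_ : G w) => W_ge0 w.
have finA' : esum A' W \is a fin_num.
  by apply: (@esum_fin_sub A' G) => // w [].
have h1 : (M E1 <= esum A' W + esum C W)%E.
  by rewrite -esum_disjU //; apply: M_le.
have h2 : (esum A W <= esum C W + d)%E.
  have : (esum A W + esum A' W <= esum A' W + esum C W + d)%E.
    rewrite -esum_disjU // -eG; apply: (le_trans leG).
    by apply: leeD2r.
  by rewrite addeC -addeA leeD2lE.
rewrite e1 esum_disjU // eL esum_disjU //.
apply: (le_trans (leeD2r _ h2)); set c := (\esum_(i in C) W i); set b := (\esum_(i in B) W i).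
by rewrite [X in (X <= _)%E]addeC addeA.
Qed.


Lemma M_union (E_ : nat -> set X) : (forall i, E_ i `<=` E_ i.+1) ->
  M (\bigcup_i E_ i) = ereal_sup (range (fun i => M (E_ i))).
Proof.
move=> incr; set a := ereal_sup _.
have Mi : forall i, (M (E_ i) <= a)%E by move=> i; apply: ereal_sup_ubound; exists i.
apply/eqP; rewrite eq_le; apply/andP; split; last first.
  by apply: ge_ereal_sup => _ [i _ <-]; apply: M_mono => x Ex; exists i.
have a0 : (0 <= a)%E := le_trans (M_ge0 (E_ 0%N)) (Mi 0%N).
case: (eqVneq a +oo%E) => [->|aoo]; first exact: leey.
have afin : a \is a fin_num by rewrite ge0_fin_numE // lt_neqAle aoo leey.
apply/lee_addgt0Pr => e e0.
pose eta i := (e / 2 ^+ i.+1)%R.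
have eta0 i : (0 < eta i)%R by rewrite divr_gt0 // exprn_gt0.
have Mfin i : M (E_ i) \is a fin_num.
  rewrite ge0_fin_numE ?M_ge0 //; apply: le_lt_trans (Mi i) _.
  by rewrite -ge0_fin_numE.
have ex : forall i, exists L, [/\ adm (E_ i) L, achain L &
    (esum L W < M (E_ i) + (eta i)%:E)%E].
  by move=> i; apply: M_approx; rewrite lteDl // lte_fin.
have [Lam hLam] := choice ex.
pose G := gam Lam.
pose d i := (e - e / 2 ^+ i.+1)%R.
have inv : forall i, [/\ adm (E_ i) (G i), achain (G i) &
    (esum (G i) W <= M (E_ i) + (d i)%:E)%E].
  elim => [|i [aG cG lG]].
    have [h1 h2 h3] := hLam 0%N; split => //; apply: ltW.
    suff -> : d 0%N = eta 0%N by [].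
    by rewrite /d /eta expr1; field.
  have [h1 h2 h3] := hLam i.+1.
  have aU : adm (E_ i.+1) (G i `|` Lam i.+1).
    split; first by move=> w [/(proj1 aG)|/(proj1 h1)].
    by move=> x Ex; have [w Lw cw] := proj2 h1 x Ex; exists w => //; right.
  have [aG' cG'] := @maxel_adm _ _ aU.
  split => //.
  have finG : esum (G i) W \is a fin_num.
    rewrite ge0_fin_numE; last by apply: esum_ge0 => *; exact: W_ge0.
    apply: le_lt_trans lG _; apply: lte_add_pinfty; last exact: ltry.
    by rewrite -ge0_fin_numE ?M_ge0.
  have := @step _ _ _ _ _ (incr i) aG cG h1 h2 finG lG => le.
  apply: le_trans le _.
  apply: le_trans (leeD2r _ (ltW h3)) _; rewrite -addeA -EFinD.
  suff -> : (eta i.+1 + d i = d i.+1)%R by [].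
  by rewrite /eta /d (exprS _ i.+1); field.
pose Sinf := \bigcup_j Lam j.
have GS : forall i, G i `<=` Sinf.
  elim => [|i IH] w /=; first by move=> Lw; exists 0%N.
  by move=> [[/IH|Lw] _] //; exists i.+1.
pose Gm := maxel Sinf.
have inG : forall j w, Gm w -> Lam j w -> G j w.
  case=> [|j] w [Sw mw] Lw //=; split; first by right.
  by move=> k kw [/GS|H]; apply: (mw k kw) => //; exists j.+1.
have incG : forall i w, Gm w -> G i w -> G i.+1 w.
  move=> i w [Sw mw] Gw /=; split; first by left.
  by move=> k kw [/GS|H]; apply: (mw k kw) => //; exists i.+1.
have aGm : adm (\bigcup_i E_ i) Gm.
  have aS : adm (\bigcup_i E_ i) Sinf.
    split; first by move=> w [j _ Lw]; have [[h _] _ _] := hLam j; exact: h.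
    move=> x [i _ Ex]; have [[_ h] _ _] := hLam i.
    by have [w Lw cw] := h x Ex; exists w => //; exists i.
  exact: (@maxel_adm _ _ aS).1.
apply: le_trans (@M_le _ _ aGm) _.
apply: ge_ereal_sup => _ [F [finF FG] <-].
have [i Fi] : exists i, F `<=` (Gm `&` G i).
  apply: finite_in_incr finF _ => //.
    by move=> i w [Gw Giw]; split => //; exact: incG.
  move=> w /FG Gw; have [j _ Lw] := Gw.1; exists j => //; split => //.
  exact: inG.
rewrite -esum_fset //; last by move=> w _; exact: W_ge0.
apply: le_trans (@esum_sub F (G i) (fun w Fw => (Fi w Fw).2)) _.
have [_ _ lG] := inv i; apply: le_trans lG _.
apply: leeD; first exact: Mi.
by rewrite lee_fin /d lerBlDr lerDl; apply: ltW; exact: eta0.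
Qed.


Lemma cyl_open w : continuous T -> str_ok w -> open (cyl T w).
Proof.
move=> cT; elim: w => [|A w IH] ok.
  have -> : cyl T [::] = setT by apply/seteqP; split => // x _ j.
  exact: openT.
have -> : cyl T (A :: w) = A `&` T @^-1` cyl T w.
  apply/seteqP; split => x.
    move=> H; split; first exact: (H 0%N).
    by move=> j jw; have := H j.+1 jw; rewrite iterSr.
  by move=> [Ax Hx] [|j] // jw; rewrite iterSr; apply: Hx.
apply: openI.
  by case: hU => _ _ _ _ /(_ A (ok 0%N isT)) [].
apply: open_comp; first by move=> x _; exact: cT.
by apply: IH => j jw; apply: (ok j.+1).
Qed.

Lemma M_inner (Z : set X) : continuous T -> analytic Z ->
  (M Z <= ereal_sup [set M K | K in [set K | K `<=` Z /\ compact K]])%E.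
Proof.
move=> cT [g [cg rg]].
set S := ereal_sup _.
rewrite leNgt; apply/negP => lt.
have S0 : (0 <= S)%E.
  apply: le_trans (M_ge0 set0) _; apply: ereal_sup_ubound; exists set0 => //.
  by split => //; exact: compact0.
have Sfin : S \is a fin_num by rewrite ge0_fin_numE // (lt_le_trans lt) ?leey.
have [r [Sr rM]] : exists r : R, (S < r%:E)%E /\ (r%:E < M Z)%E.
  case: (eqVneq (M Z) +oo%E) => MZ.
    exists (fine S + 1)%R; rewrite MZ ltry; split => //.
    by rewrite -(fineK Sfin) lte_fin ltrDl.
  have MZfin : M Z \is a fin_num by rewrite ge0_fin_numE ?M_ge0 // lt_neqAle MZ leey.
  exists ((fine S + fine (M Z)) / 2)%R.
  have h : (fine S < fine (M Z))%R by rewrite -lte_fin !fineK.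
  split; first by rewrite -(fineK Sfin) lte_fin midf_lt.
  by rewrite -(fineK MZfin) lte_fin midf_lt.
pose Pset (sq : seq nat) : set baire_space :=
  [set t | forall j, (j < size sq)%N -> (t j <= nth 0%N sq j)%N].
pose Zs sq := g @` Pset sq.
have stepv : forall sq, exists v, (r%:E < M (Zs sq))%E -> (r%:E < M (Zs (rcons sq v)))%E.
  move=> sq; have [h|h] := pselect (r%:E < M (Zs sq))%E; last by exists 0%N.
  have incr : forall v, Zs (rcons sq v) `<=` Zs (rcons sq v.+1).
    move=> v _ [t Pt <-]; exists t => // j; rewrite size_rcons => jn.
    have := Pt j; rewrite size_rcons nth_rcons => /(_ jn).
    rewrite nth_rcons; case: ltnP => // _; case: eqP => // _ tv.
    exact: leq_trans tv (leqnSn _).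
  have un : \bigcup_v Zs (rcons sq v) = Zs sq.
    apply/seteqP; split.
      move=> _ [v _ [t Pt <-]]; exists t => // j js.
      have := Pt j; rewrite size_rcons nth_rcons js; apply; exact: ltnW.
    move=> _ [t Pt <-]; exists (t (size sq)) => //; exists t => // j.
    rewrite size_rcons nth_rcons ltnS leq_eqVlt => /orP[/eqP ->|js].
      by rewrite ltnn eqxx.
    by rewrite js; apply: Pt.
  move: h; rewrite -un M_union // => /ereal_sup_gt [_ [v _ <-] lt'].
  by exists v.
have [vch hv] := choice stepv.
pose bnds := fix b k := if k is k'.+1 then rcons (b k') (vch (b k')) else [::].
have size_bnds : forall k, size (bnds k) = k.
  by elim => //= k IH; rewrite size_rcons IH.
have inv : forall k, (r%:E < M (Zs (bnds k)))%E.
  elim => [|k IH]; last exact: hv.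
  have -> : Zs (bnds 0%N) = Z.
    rewrite -rg; apply/seteqP; split => x [t _ <-]; by exists t.
  exact: rM.
pose m j := nth 0%N (bnds j.+1) j.
have nth_bnds : forall k j, (j < k)%N -> nth 0%N (bnds k) j = m j.
  elim => // k IH j; rewrite ltnS leq_eqVlt => /orP[/eqP ->|jk] //.
  by rewrite /= nth_rcons size_bnds jk IH.
pose K := g @` Pm m.
have cK : compact K.
  by apply: continuous_compact; [exact: continuous_subspaceT | exact: Pm_compact].
have KZ : K `<=` Z by rewrite -rg => _ [t _ <-]; exists t.
have MK : (r%:E <= M K)%E.
  apply: le_ereal_inf_tmp => _ [L aL <-].
  pose O := \bigcup_(w in L) cyl T w.
  have oO : open O.
    apply: bigcup_open => w Lw; apply: cyl_open => //; exact: (@adm_ok _ _ aL).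
  have oV : open (g @^-1` O) by apply: open_comp => // t _; exact: cg.
  have PV : Pm m `<=` g @^-1` O by move=> t Pt; apply: (proj2 aL); exists t.
  have [k Pk_sub] := @tube m _ oV PV.
  have aLk : adm (Zs (bnds k)) L.
    split; first exact: (proj1 aL).
    move=> _ [t Pt <-]; apply: Pk_sub => j jk.
    by rewrite -(nth_bnds k j jk); apply: Pt; rewrite size_bnds.
  exact: ltW (lt_le_trans (inv k) (@M_le _ _ aLk)).
have : (M K <= S)%E by apply: ereal_sup_ubound; exists K.
move=> /(le_trans MK) rS.
by have := lt_le_trans Sr rS; rewrite ltxx.
Qed.

End Comb.

Theorem lemma3p4 (R : realType) (X : metricType R) (T : X -> X)
  (U : set (set X)) (N : nat) (s : R) (f : X -> R) :
  compact [set: X] -> continuous T -> clopen_partition U -> continuous f ->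
  (forall (E_ : nat -> set X) (E : set X),
     (forall i, E_ i `<=` E_ i.+1) -> \bigcup_i E_ i = E ->
     (fun i => MNs T U f N s (E_ i)) @ \oo --> MNs T U f N s E) /\
  (forall Z : set X, analytic Z ->
     MNs T U f N s Z =
     ereal_sup [set MNs T U f N s K | K in [set K | K `<=` Z /\ compact K]]).
Proof.
move=> _ cT hU _; split.
  move=> E_ E incr <-; rewrite (@M_union _ _ T U f s N hU E_ incr).
  apply: ereal_nondecreasing_cvgn => i j /subnK <-.
  elim: (j - i)%N => [|k IH] //=; apply: le_trans IH _; rewrite addSn.
  by apply: M_mono; apply: incr.
move=> Z aZ; apply/eqP; rewrite eq_le; apply/andP; split.
  exact: (@M_inner _ _ T U f s N hU Z cT aZ).
by apply: ge_ereal_sup => _ [K [KZ _] <-]; apply: M_mono.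
Qed.
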